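(* Let $n\ge3$, $1<k<n/2$, $p>\frac{nk}{n-2k}$, and let $u$ be a regular solution of (1.6). Then $u'(r)<0$ for all $r>0$, $u(r)\to0$ as $r\to\infty$, and there are constants $C_1,C_2>0$ such that for all sufficiently large $r$, $$C_1r^{-\frac{n-2k}{k}}\le u(r)\le C_2r^{-\frac{2k}{p-k}}.$$
   Context: Problem (1.6) is: given $\rho>0$, find $u$ with $-\tfrac{1}{k}C_{n-1}^{k-1}(r^{n-k}|u'|^{k-1}u')'=r^{n-1}u^{p}$, $u(r)>0$ for all $r>0$, $u'(0)=0$, $u(0)=\rho$, where $C_{n-1}^{k-1}$ is the binomial coefficient. A solution $u$ of (1.6) is regular if $x\mapsto u(|x|)$ belongs to $C^2(\mathbb{R}^n)$. *)

(* Defs.v *)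
From Stdlib Require Import Reals Lra Lia Arith.
Open Scope R_scope.

(* Points of R^n are represented as x : nat -> R; only coordinates 0..n-1
   matter (all functions below only look at those). *)

Definition normn (n : nat) (x : nat -> R) : R :=
  sqrt (sum_f_R0 (fun i => x i ^ 2) (n - 1)).  (* used only with n >= 3 *)

Definition distn (n : nat) (x y : nat -> R) : R :=
  normn n (fun i => x i - y i).

Definition shift (x : nat -> R) (i : nat) (t : R) : nat -> R :=
  fun j => if Nat.eqb j i then x j + t else x j.

Definition partial_lim (f : (nat -> R) -> R) (i : nat) (x : nat -> R) (l : R) : Prop :=
  derivable_pt_lim (fun t => f (shift x i t)) 0 l.

Definition contn (n : nat) (g : (nat -> R) -> R) : Prop :=
  forall x eps, 0 < eps -> exists delta, 0 < delta /\
    forall y, distn n x y < delta -> Rabs (g y - g x) < eps.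

Definition C1n (n : nat) (f : (nat -> R) -> R) : Prop :=
  contn n f /\
  exists D : nat -> (nat -> R) -> R,
    (forall i, (i < n)%nat -> forall x, partial_lim f i x (D i x)) /\
    (forall i, (i < n)%nat -> contn n (D i)).

Definition C2n (n : nat) (f : (nat -> R) -> R) : Prop :=
  contn n f /\
  exists D : nat -> (nat -> R) -> R,
    (forall i, (i < n)%nat -> forall x, partial_lim f i x (D i x)) /\
    (forall i, (i < n)%nat -> C1n n (D i)).

Definition right_deriv (f : R -> R) (x l : R) : Prop :=
  forall eps, 0 < eps -> exists delta, 0 < delta /\
    forall h, 0 < h < delta -> Rabs ((f (x + h) - f x) / h - l) < eps.

Definition solves_1_6 (n k : nat) (p rho : R) (u u' : R -> R) : Prop :=
  (forall r, 0 < r -> derivable_pt_lim u r (u' r)) /\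
  right_deriv u 0 (u' 0) /\
  (forall r, 0 < r ->
     exists d,
       derivable_pt_lim (fun s => s ^ (n - k) * Rabs (u' s) ^ (k - 1) * u' s) r d /\
       - (1 / INR k) * C (n - 1) (k - 1) * d = r ^ (n - 1) * Rpower (u r) p) /\
  (forall r, 0 < r -> 0 < u r) /\
  u' 0 = 0 /\
  u 0 = rho.

Definition regular (n : nat) (u : R -> R) : Prop :=
  C2n n (fun x => u (normn n x)).

(* Main.v *)
Require Import Defs.
From Stdlib Require Import Reals Lra Lia ClassicalEpsilon.
Open Scope R_scope.

Lemma pick_deriv (f : R -> R) (a b : R) (P : R -> R -> Prop) :
  (forall x, a <= x <= b -> exists l, derivable_pt_lim f x l /\ P x l) ->
  exists g : R -> R, forall x, a <= x <= b -> derivable_pt_lim f x (g x) /\ P x (g x).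
Proof.
  intros H.
  assert (H' : forall x, exists l, a <= x <= b -> derivable_pt_lim f x l /\ P x l).
  { intros x. destruct (classic (a <= x <= b)) as [Hx|Hx].
    - destruct (H x Hx) as [l Hl]. exists l. intros; exact Hl.
    - exists 0. intros; contradiction. }
  exists (fun x => proj1_sig (constructive_indefinite_description _ (H' x))).
  intros x Hx. exact (proj2_sig (constructive_indefinite_description _ (H' x)) Hx).
Qed.

Lemma L_dec (f : R -> R) a b : a < b ->
  (forall x, a <= x <= b -> exists l, derivable_pt_lim f x l /\ l <= 0) -> f b <= f a.
Proof.
  intros Hab H. destruct (pick_deriv f a b (fun _ l => l <= 0) H) as [g Hg].
  destruct (MVT_cor2 f g a b Hab (fun c Hc => proj1 (Hg c Hc))) as [c [E Hc]].
  assert (g c <= 0) by (apply Hg; lra). nra.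
Qed.

Lemma L_sdec (f : R -> R) a b : a < b ->
  (forall x, a <= x <= b -> exists l, derivable_pt_lim f x l /\ l < 0) -> f b < f a.
Proof.
  intros Hab H. destruct (pick_deriv f a b (fun _ l => l < 0) H) as [g Hg].
  destruct (MVT_cor2 f g a b Hab (fun c Hc => proj1 (Hg c Hc))) as [c [E Hc]].
  assert (g c < 0) by (apply Hg; lra). nra.
Qed.

Lemma L_inc (f : R -> R) a b : a < b ->
  (forall x, a <= x <= b -> exists l, derivable_pt_lim f x l /\ 0 <= l) -> f a <= f b.
Proof.
  intros Hab H. destruct (pick_deriv f a b (fun _ l => 0 <= l) H) as [g Hg].
  destruct (MVT_cor2 f g a b Hab (fun c Hc => proj1 (Hg c Hc))) as [c [E Hc]].
  assert (0 <= g c) by (apply Hg; lra). nra.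
Qed.

Lemma pow_lt_mono (x y : R) (k : nat) : 0 < x < y -> (0 < k)%nat -> x ^ k < y ^ k.
Proof.
  intros Hxy Hk. induction k as [|k IH]; [lia|].
  destruct k as [|k]. { simpl; lra. }
  assert (IH' : x ^ S k < y ^ S k) by (apply IH; lia).
  assert (0 < x ^ S k) by (apply pow_lt; lra).
  change (x * x ^ S k < y * y ^ S k). nra.
Qed.

Lemma pow_ge_inv (x y : R) (k : nat) : 0 < x -> 0 < y -> (0 < k)%nat -> y ^ k <= x ^ k -> y <= x.
Proof.
  intros Hx Hy Hk H. destruct (Rle_lt_dec y x) as [|Hl]; auto.
  assert (x ^ k < y ^ k) by (apply pow_lt_mono; [lra|lia]). lra.
Qed.

Lemma Rpower_pos x y : 0 < Rpower x y.
Proof. unfold Rpower; apply exp_pos. Qed.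

Lemma Rpower_base_lt s t x : 0 < s -> s < t -> x < 0 -> Rpower t x < Rpower s x.
Proof.
  intros Hs Hst Hx. unfold Rpower. apply exp_increasing.
  assert (ln s < ln t) by (apply ln_increasing; lra). nra.
Qed.

Lemma Rpower_base_le s t x : 0 < s -> s <= t -> x < 0 -> Rpower t x <= Rpower s x.
Proof.
  intros Hs Hst Hx. destruct (Req_dec s t) as [->|]; [lra|].
  left; apply Rpower_base_lt; lra.
Qed.

Lemma Rpower_base_le_pos s t x : 0 < s -> s <= t -> 0 <= x -> Rpower s x <= Rpower t x.
Proof.
  intros Hs Hst Hx. unfold Rpower. destruct (Req_dec s t) as [->|]; [lra|].
  assert (ln s < ln t) by (apply ln_increasing; lra).
  destruct (Req_dec x 0) as [->|]. { rewrite !Rmult_0_l; lra. }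
  left; apply exp_increasing; nra.
Qed.

Lemma Rpower_inv_exp z e : 0 < z -> e <> 0 -> Rpower (Rpower z (/ e)) e = z.
Proof. intros Hz He. rewrite Rpower_mult. rewrite Rinv_l by auto. apply Rpower_1; auto. Qed.

Lemma root_bound (x c : R) (k : nat) : (0 < k)%nat -> 0 < x -> 0 < c -> c <= x ^ k ->
  Rpower c (/ INR k) <= x.
Proof.
  intros Hk Hx Hc H. apply (pow_ge_inv _ _ k); auto. apply Rpower_pos.
  rewrite <- Rpower_pow by apply Rpower_pos. rewrite Rpower_inv_exp; auto.
  apply not_0_INR; lia.
Qed.

Lemma dscal (f: R->R) A x l : derivable_pt_lim f x l -> derivable_pt_lim (fun y => A * f y) x (A*l).
Proof. intros H. assert (H2 := derivable_pt_lim_mult (fun _ => A) f x 0 l (derivable_pt_lim_const A x) H).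
  replace (A*l) with (0 * f x + A * l) by ring. exact H2. Qed.
Lemma dminus (f g: R->R) x l1 l2 : derivable_pt_lim f x l1 -> derivable_pt_lim g x l2 ->
  derivable_pt_lim (fun y => f y - g y) x (l1 - l2).
Proof. intros H1 H2. exact (derivable_pt_lim_minus f g x l1 l2 H1 H2). Qed.
Lemma dplus (f g: R->R) x l1 l2 : derivable_pt_lim f x l1 -> derivable_pt_lim g x l2 ->
  derivable_pt_lim (fun y => f y + g y) x (l1 + l2).
Proof. intros H1 H2. exact (derivable_pt_lim_plus f g x l1 l2 H1 H2). Qed.

Lemma dpow_e x e : 0 < x -> derivable_pt_lim (fun y => Rpower y e) x (e * Rpower x (e - 1)).
Proof. apply derivable_pt_lim_power. Qed.

Lemma powk x k : (1 <= k)%nat -> x ^ (k - 1) * x = x ^ k.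
Proof. intros Hk. destruct k; [lia|]. simpl. rewrite Nat.sub_0_r. ring. Qed.

Lemma root_for_w (n k : nat) x s c : (1 <= k)%nat -> (k <= n)%nat -> 0 < x -> 0 < s -> 0 < c ->
  c <= s ^ (n - k) * x ^ k ->
  Rpower c (/ INR k) * Rpower s (- (INR n - INR k) / INR k) <= x.
Proof.
  intros Hk Hkn Hx Hs Hc H.
  assert (Hsp : 0 < s ^ (n - k)) by (apply pow_lt; lra).
  assert (HK : 0 < INR k) by (apply lt_0_INR; lia).
  assert (E : Rpower c (/ INR k) * Rpower s (- (INR n - INR k) / INR k)
            = Rpower (c * / s ^ (n - k)) (/ INR k)).
  { rewrite <- Rpower_mult_distr; [|lra|apply Rinv_0_lt_compat; lra]. f_equal.
    rewrite <- Rpower_pow by lra. rewrite <- Rpower_Ropp. rewrite Rpower_mult.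
    rewrite minus_INR by lia. f_equal. }
  rewrite E. apply root_bound; try lia; auto.
  - apply Rmult_lt_0_compat; [lra|apply Rinv_0_lt_compat; lra].
  - apply (Rmult_le_reg_l (s ^ (n - k))); auto. field_simplify; lra.
Qed.

Lemma Cpos n k : (k <= n)%nat -> 0 < C n k.
Proof.
  intros. unfold C. apply Rdiv_lt_0_compat; [apply INR_fact_lt_0|].
  apply Rmult_lt_0_compat; apply INR_fact_lt_0.
Qed.

Definition W (n k : nat) (u' : R -> R) := fun s => s ^ (n - k) * Rabs (u' s) ^ (k - 1) * u' s.

Lemma part1 (n k : nat) (u u' : R -> R) : (1 < k)%nat -> (2 * k < n)%nat ->
  (forall r, 0 < r -> derivable_pt_lim u r (u' r)) ->
  (forall s t, 0 < s < t -> W n k u' t < W n k u' s) ->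
  (forall r, 0 < r -> 0 < u r) ->
  forall r, 0 < r -> u' r < 0.
Proof.
  intros Hk Hn Hd Hw Hu r0 Hr0.
  destruct (Rlt_or_le (u' r0) 0) as [|Hge]; auto. exfalso.
  assert (HK : 0 < INR k) by (apply lt_0_INR; lia).
  assert (HNK : INR n - 2 * INR k > 0).
  { assert (INR (2 * k) < INR n) by (apply lt_INR; lia). rewrite mult_INR in H. simpl in H. lra. }
  assert (W0 : 0 <= W n k u' r0).
  { unfold W. apply Rmult_le_pos; [apply Rmult_le_pos|]; auto.
    apply pow_le; lra. apply pow_le, Rabs_pos. }
  set (r1 := r0 / 2).
  set (c := W n k u' r1).
  assert (Hc : 0 < c) by (assert (W n k u' r0 < W n k u' r1) by (apply Hw; unfold r1; lra); unfold c; lra).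
  set (m := Rpower c (/ INR k)). set (q := - (INR n - INR k) / INR k).
  assert (Hm : 0 < m) by apply Rpower_pos.
  assert (Hbound : forall x, 0 < x <= r1 -> m * Rpower x q <= u' x).
  { intros x Hx.
    assert (Wx : c <= W n k u' x).
    { destruct (Req_dec x r1) as [->|]; [unfold c; lra|]. left; apply Hw; lra. }
    assert (Hux : 0 < u' x).
    { destruct (Rlt_or_le 0 (u' x)) as [|Hle]; auto. exfalso.
      assert (W n k u' x <= 0).
      { unfold W. assert (0 <= x ^ (n - k) * Rabs (u' x) ^ (k - 1)).
        { apply Rmult_le_pos; [apply pow_le; lra| apply pow_le, Rabs_pos]. }
        nra. }
      lra. }
    apply (root_for_w n k); try lia; try lra.
    unfold W in Wx. rewrite Rabs_pos_eq in Wx by lra. rewrite Rmult_assoc, powk in Wx by lia. exact Wx. }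
  set (e := q + 1).
  assert (He : e < 0).
  { unfold e, q. apply (Rmult_lt_reg_r (INR k)); auto. field_simplify; lra. }
  set (G := fun x => u x - m / e * Rpower x e).
  assert (HG : forall s, 0 < s < r1 -> G s <= G r1).
  { intros s Hs. apply L_inc; [lra|]. intros x Hx.
    exists (u' x - m / e * (e * Rpower x (e - 1))). split.
    - apply dminus; [apply Hd; lra|]. apply dscal, dpow_e; lra.
    - replace (e - 1) with q by (unfold e; ring).
      assert (m * Rpower x q <= u' x) by (apply Hbound; lra).
      replace (m / e * (e * Rpower x q)) with (m * Rpower x q) by (field; lra). lra. }
  set (X := Rpower r1 e + Rabs (G r1) * (- e / m) + 1).
  assert (HX : 0 < X).
  { unfold X. assert (0 <= Rabs (G r1) * (- e / m)).
    { apply Rmult_le_pos; [apply Rabs_pos|]. unfold Rdiv; apply Rmult_le_pos; [lra| left; apply Rinv_0_lt_compat; lra]. }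
    pose proof (Rpower_pos r1 e). lra. }
  set (s := Rpower X (/ e)).
  assert (Hs : Rpower s e = X) by (apply Rpower_inv_exp; lra).
  assert (Hs0 : 0 < s) by apply Rpower_pos.
  assert (Hsr : s < r1).
  { destruct (Rlt_or_le s r1) as [|Hle]; auto. exfalso.
    assert (Rpower s e <= Rpower r1 e) by (apply Rpower_base_le; [unfold r1; lra | exact Hle | exact He]).
    assert (0 <= Rabs (G r1) * (- e / m)).
    { apply Rmult_le_pos; [apply Rabs_pos|]. unfold Rdiv; apply Rmult_le_pos; [lra| left; apply Rinv_0_lt_compat; lra]. }
    unfold X in Hs. lra. }
  pose proof (HG s (conj Hs0 Hsr)) as HGs.
  unfold G at 1 in HGs. rewrite Hs in HGs.
  pose proof (Hu s Hs0).
  assert (E1 : - (m / e) * X = - (m / e) * Rpower r1 e + Rabs (G r1) - m / e).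
  { unfold X. field. split; lra. }
  assert (Hme : m / e < 0).
  { unfold Rdiv. assert (/ e < 0) by (apply Rinv_lt_0_compat; lra). nra. }
  assert (0 < - (m / e) * Rpower r1 e).
  { apply Rmult_lt_0_compat; [lra|apply Rpower_pos]. }
  pose proof (Rle_abs (G r1)). lra.
Qed.

Lemma pow_le_self s n : 0 <= s <= 1 -> (1 <= n)%nat -> s ^ n <= s.
Proof.
  intros Hs Hn. induction n as [|n IH]; [lia|]. destruct n. { simpl; lra. }
  assert (s ^ S n <= s) by (apply IH; lia). change (s * s ^ S n <= s). nra.
Qed.

Lemma wdec (n k : nat) p (u u' : R -> R) : (1 < k)%nat -> (2 * k < n)%nat ->
  (forall r, 0 < r ->
     exists d,
       derivable_pt_lim (fun s => s ^ (n - k) * Rabs (u' s) ^ (k - 1) * u' s) r d /\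
       - (1 / INR k) * C (n - 1) (k - 1) * d = r ^ (n - 1) * Rpower (u r) p) ->
  forall s t, 0 < s < t -> W n k u' t < W n k u' s.
Proof.
  intros Hk Hn H3 s t Hst. apply L_sdec; [lra|]. intros x Hx.
  destruct (H3 x ltac:(lra)) as [d [Hd Ed]]. exists d. split; [exact Hd|].
  assert (HK : 0 < INR k) by (apply lt_0_INR; lia).
  assert (HC : 0 < C (n - 1) (k - 1)) by (apply Cpos; lia).
  assert (0 < x ^ (n - 1) * Rpower (u x) p).
  { apply Rmult_lt_0_compat; [apply pow_lt; lra | apply Rpower_pos]. }
  assert (0 < 1 / INR k * C (n - 1) (k - 1)).
  { apply Rmult_lt_0_compat; auto. unfold Rdiv. rewrite Rmult_1_l. apply Rinv_0_lt_compat; auto. }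
  nra.
Qed.

Lemma wbound (n k : nat) p (u u' : R -> R) : (1 < k)%nat -> (2 * k < n)%nat -> 0 <= p ->
  (forall r, 0 < r -> derivable_pt_lim u r (u' r)) ->
  (forall r, 0 < r ->
     exists d,
       derivable_pt_lim (fun s => s ^ (n - k) * Rabs (u' s) ^ (k - 1) * u' s) r d /\
       - (1 / INR k) * C (n - 1) (k - 1) * d = r ^ (n - 1) * Rpower (u r) p) ->
  (forall r, 0 < r -> 0 < u r) ->
  (forall r, 0 < r -> u' r < 0) ->
  forall r, 0 < r ->
    W n k u' r <= - (INR k / (INR n * C (n - 1) (k - 1)) * Rpower (u r) p) * r ^ n.
Proof.
  intros Hk Hn Hp Hd H3 Hu Hneg r Hr.
  assert (HK : 0 < INR k) by (apply lt_0_INR; lia).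
  assert (HN : 0 < INR n) by (apply lt_0_INR; lia).
  assert (HC : 0 < C (n - 1) (k - 1)) by (apply Cpos; lia).
  set (D := INR k / (INR n * C (n - 1) (k - 1)) * Rpower (u r) p).
  assert (HD : 0 < D).
  { unfold D. apply Rmult_lt_0_compat; [|apply Rpower_pos]. apply Rdiv_lt_0_compat; auto.
    apply Rmult_lt_0_compat; auto. }
  set (g := fun x => W n k u' x + D * x ^ n).
  assert (Hudec : forall x, 0 < x <= r -> u r <= u x).
  { intros x Hx. destruct (Req_dec x r) as [->|]; [lra|]. left. apply L_sdec; [lra|].
    intros y Hy. exists (u' y). split; [apply Hd; lra| apply Hneg; lra]. }
  assert (Hg : forall s, 0 < s < r -> g r <= g s).
  { intros s Hs. apply L_dec; [lra|]. intros x Hx.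
    destruct (H3 x ltac:(lra)) as [d [Hdd Ed]].
    exists (d + D * (INR n * x ^ Init.Nat.pred n)). split.
    - apply dplus; [exact Hdd|]. apply dscal, derivable_pt_lim_pow.
    - assert (Ed' : d = - (INR k / C (n - 1) (k - 1)) * (x ^ (n - 1) * Rpower (u x) p)).
      { rewrite <- Ed. field. split; lra. }
      rewrite Ed'. replace (Init.Nat.pred n) with (n - 1)%nat by lia.
      assert (Rpower (u r) p <= Rpower (u x) p).
      { apply Rpower_base_le_pos; [apply Hu; lra | apply Hudec; lra | exact Hp]. }
      assert (E2 : D * (INR n * x ^ (n - 1)) = INR k / C (n - 1) (k - 1) * x ^ (n - 1) * Rpower (u r) p).
      { unfold D. field. split; lra. }
      rewrite E2.
      assert (0 < INR k / C (n - 1) (k - 1) * x ^ (n - 1)).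
      { apply Rmult_lt_0_compat; [apply Rdiv_lt_0_compat; auto| apply pow_lt; lra]. }
      nra. }
  destruct (Rle_or_lt (g r) 0) as [Hle|Hgt].
  { unfold g in Hle. lra. }
  exfalso.
  set (s := Rmin (r / 2) (Rmin (1 / 2) (g r / (2 * (D + 1))))).
  assert (Hs1 : s <= r / 2) by apply Rmin_l.
  assert (Hs2 : s <= 1 / 2) by (eapply Rle_trans; [apply Rmin_r| apply Rmin_l]).
  assert (Hs3 : s <= g r / (2 * (D + 1))) by (eapply Rle_trans; [apply Rmin_r| apply Rmin_r]).
  assert (Hs0 : 0 < s).
  { unfold s. apply Rmin_pos; [lra|]. apply Rmin_pos; [lra|]. apply Rdiv_lt_0_compat; lra. }
  pose proof (Hg s ltac:(lra)) as Hgs.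
  assert (Ws : W n k u' s < 0).
  { unfold W. pose proof (Hneg s Hs0).
    assert (0 < s ^ (n - k) * Rabs (u' s) ^ (k - 1)).
    { apply Rmult_lt_0_compat; [apply pow_lt; lra| apply pow_lt; apply Rabs_pos_lt; lra]. }
    nra. }
  assert (s ^ n <= s) by (apply pow_le_self; lia || lra).
  assert (D * s <= D * (g r / (2 * (D + 1)))) by (apply Rmult_le_compat_l; lra).
  assert (D * (g r / (2 * (D + 1))) < g r).
  { apply (Rmult_lt_reg_r (2 * (D + 1))); [lra|]. field_simplify; [nra|lra]. }
  unfold g in Hgs at 2. nra.
Qed.

Lemma upper (n k : nat) p (u u' : R -> R) : (1 < k)%nat -> (2 * k < n)%nat -> INR k < p ->
  (forall r, 0 < r -> derivable_pt_lim u r (u' r)) ->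
  (forall r, 0 < r -> 0 < u r) ->
  (forall r, 0 < r -> u' r < 0) ->
  (forall r, 0 < r ->
    W n k u' r <= - (INR k / (INR n * C (n - 1) (k - 1)) * Rpower (u r) p) * r ^ n) ->
  exists C2, 0 < C2 /\ forall r, 2 < r -> u r <= C2 * Rpower r (- (2 * INR k / (p - INR k))).
Proof.
  intros Hk Hn Hp Hd Hu Hneg Hwb.
  assert (HK : 0 < INR k) by (apply lt_0_INR; lia).
  assert (HN : 0 < INR n) by (apply lt_0_INR; lia).
  assert (HC : 0 < C (n - 1) (k - 1)) by (apply Cpos; lia).
  set (kap := INR k / (INR n * C (n - 1) (k - 1))).
  assert (Hkap : 0 < kap) by (apply Rdiv_lt_0_compat; auto; apply Rmult_lt_0_compat; auto).
  set (E := Rpower kap (/ INR k)).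
  assert (HE : 0 < E) by apply Rpower_pos.
  set (beta := (p - INR k) / INR k).
  assert (Hb : 0 < beta) by (apply Rdiv_lt_0_compat; lra).
  assert (Hud : forall r, 0 < r -> E * Rpower (u r) (p / INR k) * r <= - u' r).
  { intros r Hr. pose proof (Hwb r Hr) as Hw. pose proof (Hneg r Hr). pose proof (Hu r Hr).
    unfold W in Hw. rewrite Rabs_left in Hw by lra.
    replace (r ^ (n - k) * (- u' r) ^ (k - 1) * u' r) with (- (r ^ (n - k) * ((- u' r) ^ (k - 1) * (- u' r)))) in Hw by ring.
    rewrite powk in Hw by lia.
    assert (Hrn : r ^ n = r ^ (n - k) * r ^ k) by (rewrite <- pow_add; f_equal; lia).
    rewrite Hrn in Hw.
    assert (Hrk : 0 < r ^ (n - k)) by (apply pow_lt; lra).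
    assert (Hc : kap * Rpower (u r) p * r ^ k <= (- u' r) ^ k).
    { apply (Rmult_le_reg_l (r ^ (n - k))); auto.
      replace (r ^ (n - k) * (kap * Rpower (u r) p * r ^ k)) with (kap * Rpower (u r) p * (r ^ (n - k) * r ^ k)) by ring.
      unfold kap. lra. }
    assert (E1 : E * Rpower (u r) (p / INR k) * r = Rpower (kap * Rpower (u r) p * r ^ k) (/ INR k)).
    { rewrite <- !Rpower_mult_distr; try apply Rpower_pos; try apply pow_lt; auto.
      2: { apply Rmult_lt_0_compat; auto; apply Rpower_pos. }
      unfold E. rewrite Rpower_mult. rewrite <- Rpower_pow by lra. rewrite Rpower_mult.
      rewrite Rinv_r by lra. rewrite Rpower_1 by lra. reflexivity. }
    rewrite E1. apply root_bound; try lia; try lra.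
    apply Rmult_lt_0_compat; [apply Rmult_lt_0_compat; auto; apply Rpower_pos| apply pow_lt; lra]. }
  set (V := fun x => Rpower (u x) (- beta)).
  set (Phi := fun x => V x - beta * E / 2 * x ^ 2).
  assert (HPhi : forall r, 1 < r -> Phi 1 <= Phi r).
  { intros r Hr. apply L_inc; [lra|]. intros x Hx.
    exists ((- beta * Rpower (u x) (- beta - 1)) * u' x - beta * E / 2 * (INR 2 * x ^ Init.Nat.pred 2)).
    split.
    - apply dminus; [|apply dscal, derivable_pt_lim_pow].
      exact (derivable_pt_lim_comp u (fun y => Rpower y (- beta)) x _ _ (Hd x ltac:(lra))
               (dpow_e _ _ (Hu x ltac:(lra)))).
    - pose proof (Hud x ltac:(lra)) as Hx'.
      assert (Hpos : 0 < beta * Rpower (u x) (- beta - 1)) by (apply Rmult_lt_0_compat; auto; apply Rpower_pos).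
      assert (E2 : beta * Rpower (u x) (- beta - 1) * (E * Rpower (u x) (p / INR k) * x) = beta * E * x).
      { replace (beta * Rpower (u x) (- beta - 1) * (E * Rpower (u x) (p / INR k) * x))
          with (beta * E * x * (Rpower (u x) (- beta - 1) * Rpower (u x) (p / INR k))) by ring.
        rewrite <- Rpower_plus. replace (- beta - 1 + p / INR k) with 0 by (unfold beta; field; lra).
        rewrite Rpower_O by (apply Hu; lra). ring. }
      simpl INR. simpl pow. nra. }
  set (C2 := Rpower (beta * E / 4) (- / beta)).
  exists C2. split; [apply Rpower_pos|]. intros r Hr.
  pose proof (HPhi r ltac:(lra)) as H1. unfold Phi in H1.
  assert (HV1 : 0 < V 1) by apply Rpower_pos.
  assert (HVr : beta * E / 4 * r ^ 2 <= V r).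
  { assert (0 < beta * E) by (apply Rmult_lt_0_compat; auto). simpl pow in *.
    assert (r * r > 4) by nra. assert (0 <= beta * E * (r * r - 2)) by nra.
    set (bE := beta * E) in *. lra. }
  assert (Hur : u r = Rpower (V r) (- / beta)).
  { unfold V. rewrite Rpower_mult. replace (- beta * - / beta) with 1 by (field; lra).
    rewrite Rpower_1; auto. apply Hu; lra. }
  rewrite Hur.
  assert (Hbe : 0 < beta * E / 4) by (assert (0 < beta * E) by (apply Rmult_lt_0_compat; auto); lra).
  eapply Rle_trans.
  { apply Rpower_base_le; [| exact HVr|].
    - apply Rmult_lt_0_compat; auto. apply pow_lt; lra.
    - assert (0 < / beta) by (apply Rinv_0_lt_compat; lra). lra. }
  rewrite <- Rpower_mult_distr; [| auto | apply pow_lt; lra].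
  unfold C2. apply Req_le. f_equal.
  replace 2%nat with (2%nat) by reflexivity.
  rewrite <- (Rpower_pow 2 r) by lra. rewrite Rpower_mult. f_equal.
  unfold beta. simpl INR. field. split; lra.
Qed.

Lemma lower (n k : nat) (u u' : R -> R) : (1 < k)%nat -> (2 * k < n)%nat ->
  (forall r, 0 < r -> derivable_pt_lim u r (u' r)) ->
  (forall s t, 0 < s < t -> W n k u' t < W n k u' s) ->
  (forall r, 0 < r -> 0 < u r) ->
  (forall r, 0 < r -> u' r < 0) ->
  exists C1, 0 < C1 /\ forall r, 1 < r -> C1 * Rpower r (- ((INR n - 2 * INR k) / INR k)) <= u r.
Proof.
  intros Hk Hn Hd Hw Hu Hneg.
  assert (HK : 0 < INR k) by (apply lt_0_INR; lia).
  assert (HNK : INR n - 2 * INR k > 0).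
  { assert (INR (2 * k) < INR n) by (apply lt_INR; lia). rewrite mult_INR in H. simpl in H. lra. }
  set (c := - W n k u' 1).
  assert (Hc : 0 < c).
  { unfold c, W. pose proof (Hneg 1 ltac:(lra)).
    assert (0 < 1 ^ (n - k) * Rabs (u' 1) ^ (k - 1)).
    { apply Rmult_lt_0_compat; [apply pow_lt; lra| apply pow_lt; apply Rabs_pos_lt; lra]. }
    nra. }
  set (m := Rpower c (/ INR k)). set (q := - (INR n - INR k) / INR k).
  assert (Hm : 0 < m) by apply Rpower_pos.
  assert (Hbound : forall x, 1 <= x -> m * Rpower x q <= - u' x).
  { intros x Hx.
    assert (Wx : W n k u' x <= W n k u' 1).
    { destruct (Req_dec x 1) as [->|]; [lra|]. left; apply Hw; lra. }
    pose proof (Hneg x ltac:(lra)).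
    apply (root_for_w n k); try lia; try lra.
    assert (Wx' : W n k u' x = - (x ^ (n - k) * (- u' x) ^ k)).
    { unfold W. rewrite Rabs_left by lra. rewrite <- (powk (- u' x) k) by lia. ring. }
    assert (c = - W n k u' 1) by reflexivity. lra. }
  set (e := q + 1).
  assert (He : e < 0).
  { unfold e, q. apply (Rmult_lt_reg_r (INR k)); auto. field_simplify; lra. }
  assert (Hme : m / e < 0).
  { unfold Rdiv. assert (/ e < 0) by (apply Rinv_lt_0_compat; lra). nra. }
  set (Hf := fun x => u x + m / e * Rpower x e).
  assert (HH : forall r t, 1 <= r < t -> Hf t <= Hf r).
  { intros r t Hrt. apply L_dec; [lra|]. intros x Hx.
    exists (u' x + m / e * (e * Rpower x (e - 1))). split.
    - apply dplus; [apply Hd; lra|]. apply dscal, dpow_e; lra.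
    - replace (e - 1) with q by (unfold e; ring).
      assert (m * Rpower x q <= - u' x) by (apply Hbound; lra).
      replace (m / e * (e * Rpower x q)) with (m * Rpower x q) by (field; lra). lra. }
  exists (- (m / e)). split; [lra|]. intros r Hr.
  replace (- ((INR n - 2 * INR k) / INR k)) with e by (unfold e, q; field; lra).
  destruct (Rle_or_lt 0 (Hf r)) as [H0|Hlt].
  { unfold Hf in H0. lra. }
  exfalso. set (delta := - Hf r).
  set (Y := delta * (- e / m)).
  assert (HY : 0 < Y).
  { unfold Y. apply Rmult_lt_0_compat; [unfold delta; lra|].
    unfold Rdiv. apply Rmult_lt_0_compat; [lra| apply Rinv_0_lt_compat; lra]. }
  set (t := Rmax (r + 1) (Rpower Y (/ e))).
  assert (Ht1 : r + 1 <= t) by apply Rmax_l.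
  assert (Ht2 : Rpower Y (/ e) <= t) by apply Rmax_r.
  assert (HtY : Rpower t e <= Y).
  { rewrite <- (Rpower_inv_exp Y e) by lra.
    apply Rpower_base_le; auto. apply Rpower_pos. }
  pose proof (HH r t ltac:(lra)) as Ht.
  pose proof (Hu t ltac:(lra)).
  assert (m / e * Rpower t e >= m / e * Y) by (apply Rle_ge; apply Rmult_le_compat_neg_l; lra).
  assert (m / e * Y = - delta) by (unfold Y; field; lra).
  unfold Hf at 1 in Ht. fold delta in Ht. unfold delta in *. lra.
Qed.

Theorem lemma2p1 (n k : nat) (p rho : R) (u u' : R -> R) :
  (3 <= n)%nat -> (1 < k)%nat -> (2 * k < n)%nat ->
  INR n * INR k / (INR n - 2 * INR k) < p ->
  0 < rho ->
  solves_1_6 n k p rho u u' ->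
  regular n u ->
  (forall r, 0 < r -> u' r < 0) /\
  (forall eps, 0 < eps -> exists R0, forall r, R0 < r -> Rabs (u r) < eps) /\
  (exists C1 C2 R0, 0 < C1 /\ 0 < C2 /\
     forall r, R0 < r ->
       C1 * Rpower r (- ((INR n - 2 * INR k) / INR k)) <= u r /\
       u r <= C2 * Rpower r (- (2 * INR k / (p - INR k)))).
Proof.
  intros H3n Hk Hn Hp Hrho Hsol _.
  destruct Hsol as [Hd [_ [H3 [Hu _]]]].
  assert (HK : 0 < INR k) by (apply lt_0_INR; lia).
  assert (HNK : INR n - 2 * INR k > 0).
  { assert (INR (2 * k) < INR n) by (apply lt_INR; lia). rewrite mult_INR in H. simpl in H. lra. }
  assert (HpK : INR k < p).
  { assert (INR k < INR n * INR k / (INR n - 2 * INR k)).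
    { apply (Rmult_lt_reg_r (INR n - 2 * INR k)); [lra|]. field_simplify; nra. }
    lra. }
  pose proof (wdec n k p u u' Hk Hn H3) as Hw.
  pose proof (part1 n k u u' Hk Hn Hd Hw Hu) as Hneg.
  pose proof (wbound n k p u u' Hk Hn ltac:(lra) Hd H3 Hu Hneg) as Hwb.
  destruct (upper n k p u u' Hk Hn HpK Hd Hu Hneg Hwb) as [C2 [HC2 Hup]].
  destruct (lower n k u u' Hk Hn Hd Hw Hu Hneg) as [C1 [HC1 Hlo]].
  split; [exact Hneg|]. split.
  - intros eps Heps. set (b := 2 * INR k / (p - INR k)).
    assert (Hb : 0 < b) by (apply Rdiv_lt_0_compat; lra).
    set (s := Rpower (eps / C2) (- / b)).
    exists (Rmax 2 s). intros r Hr.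
    assert (H2r : 2 < r) by (eapply Rle_lt_trans; [apply Rmax_l| exact Hr]).
    assert (Hsr : s < r) by (eapply Rle_lt_trans; [apply Rmax_r| exact Hr]).
    rewrite Rabs_pos_eq by (left; apply Hu; lra).
    eapply Rle_lt_trans; [apply Hup; exact H2r|].
    assert (Rpower r (- b) < Rpower s (- b)) by (apply Rpower_base_lt; [apply Rpower_pos| exact Hsr| lra]).
    assert (Rpower s (- b) = eps / C2).
    { unfold s. rewrite Rpower_mult. replace (- / b * - b) with 1 by (field; lra).
      apply Rpower_1. apply Rdiv_lt_0_compat; lra. }
    fold b. apply (Rmult_lt_reg_r (/ C2)); [apply Rinv_0_lt_compat; lra|].
    replace (C2 * Rpower r (- b) * / C2) with (Rpower r (- b)) by (field; lra).
    replace (eps * / C2) with (eps / C2) by reflexivity. lra.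
  - exists C1, C2, 2. split; [lra|]. split; [lra|]. intros r Hr. split.
    + apply Hlo; lra.
    + apply Hup; lra.
Qed.
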